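(* Let $(X,d,\mu)$, $p$, $\underline{Q}_\mu$ be as in the context. Fix $\underline{\theta}\in[0,\min\{p,\underline{Q}_\mu\})$, $\theta\in[\underline{\theta},p)$, an integer $N\ge2$, numbers $0\le\theta_1<\dots<\theta_N=\underline{\theta}$, closed sets $S^i\in\mathcal{ADR}_{\theta_i}(X)$, and $\mathfrak m_k:=\sum_{i=1}^N2^{k(\theta-\theta_i)}\mathcal H_{\theta_i}\lfloor_{S^i}$, $k\in\mathbb N_0$. Then for each $c\ge1$ there is a constant $C>0$ such that the following holds. If $k\in\mathbb N_0$, $B=cB_k(\underline x)$ with $\underline x\in X$, and $\mathcal I\subset\{1,\dots,N\}$ are such that for each $i\in\mathcal I$ there is $x_i\in S^i$ with $B_k(x_i)\subset B$, and $B\cap S^j=\emptyset$ for all $j\in\{1,\dots,N\}\setminus\mathcal I$, then for every $f\in L^{loc}_1(\mathfrak m_0)$, $$\mathcal E_{\mathfrak m_k}(f,B)\le C\Big(\sum_{i\in\mathcal I}\mathcal E_{\mathcal H_{\theta_i}\lfloor_{S^i}}(f,B)+\sum_{\substack{i,j\in\mathcal I\\ i\ne j}}\mathrm{Av}_{B\cap S^i,\mathcal H_{\theta_i}}\mathrm{Av}_{B\cap S^j,\mathcal H_{\theta_j}}|f(y')-f(z')|\Big).$$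
   Context: Standing setting: $(X,d)$ complete separable metric space, $\mu$ a Borel regular locally finite outer measure, $\operatorname{supp}\mu=X$, uniformly locally doubling (for every $R>0$, $\sup_{r\in(0,R]}\sup_x\mu(B_{2r}(x))/\mu(B_r(x))<\infty$). Balls are closed, $B_r(x)=\{y:d(x,y)\le r\}$, $cB_r(x)=B_{cr}(x)$, $B_k(x)=B_{2^{-k}}(x)$. A fixed $p\in(1,\infty)$; $X$ supports a weak local $(1,p)$-Poincaré inequality (for every $R>0$ there are $C,\lambda\ge1$ with $\inf_c\frac{1}{\mu(B_r(x))}\int_{B_r(x)}|f-c|d\mu\le Cr(\frac{1}{\mu(B_{\lambda r}(x))}\int_{B_{\lambda r}(x)}(\operatorname{lip}f)^pd\mu)^{1/p}$ for Lipschitz $f$, $x\in X$, $r\in(0,R]$). $\underline{Q}_\mu$ is the infimum of $Q>0$ such that for every $R>0$ there is $C$ with $(r_{B'}/r_B)^Q\le C\mu(B')/\mu(B)$ for balls $B'\subset B$, $0<r_{B'}\le r_B\le R$. Notation: $\mathrm{Av}_{G,\mathfrak m}(g)=\mathfrak m(G)^{-1}\int_Gg\,d\mathfrak m$ if $\mathfrak m(G)>0$, else $0$ (the double mean in the claim is over $y'\in B\cap S^i$ and $z'\in B\cap S^j$); $\mathcal E_{\mathfrak m}(g,G):=\inf_{c\in\mathbb R}\mathrm{Av}_{G,\mathfrak m}(|g-c|)$; $\mathfrak m\lfloor_S(E)=\mathfrak m(E\cap S)$. $\mathcal H_{\vartheta,\delta}(E):=\inf\{\sum\mu(B_{r_i}(x_i))r_i^{-\vartheta}:E\subset\bigcup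 B_{r_i}(x_i),0<r_i<\delta\}$, $\mathcal H_\vartheta=\lim_{\delta\to0}\mathcal H_{\vartheta,\delta}$. $\mathcal{ADR}_\vartheta(X)$: closed $S'$ with $\varkappa_1\mu(B_r(x))r^{-\vartheta}\le\mathcal H_\vartheta(B_r(x)\cap S')\le\varkappa_2\mu(B_r(x))r^{-\vartheta}$ for $x\in S'$, $r\in(0,1]$. *)

(* Defs.v *)
From HB Require Import structures.
From mathcomp Require Import all_boot all_order all_algebra.
From mathcomp Require Import all_classical all_reals all_analysis.
Set Implicit Arguments. Unset Strict Implicit. Unset Printing Implicit Defensive.
Import Order.TTheory GRing.Theory Num.Theory.
Import numFieldNormedType.Exports.
Local Open Scope classical_set_scope.
Local Open Scope ring_scope.

Section Defs.
Context {R : realType} {dsp : measure_display} {T : measurableType dsp}.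
Variable dist : T -> T -> R.

Definition cball (x : T) (r : R) : set T := [set y | dist x y <= r].

Definition is_metric : Prop :=
  [/\ (forall x y, 0 <= dist x y), (forall x y, dist x y = 0 <-> x = y),
      (forall x y, dist x y = dist y x) &
      (forall x y z, dist x z <= dist x y + dist y z)].

Definition complete_metric : Prop :=
  forall u : nat -> T,
    (forall e, 0 < e -> exists n0, forall m n, (n0 <= m)%N -> (n0 <= n)%N ->
        dist (u m) (u n) < e) ->
    exists l, forall e, 0 < e -> exists n0, forall n, (n0 <= n)%N -> dist (u n) l < e.

Definition separable_metric : Prop :=
  exists s : nat -> T, forall x e, 0 < e -> exists n, dist x (s n) < e.

Definition d_open (A : set T) : Prop :=
  forall x, A x -> exists2 e, 0 < e & [set y | dist x y < e] `<=` A.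

Definition d_closed (A : set T) : Prop :=
  forall x, (forall e, 0 < e -> exists y, A y /\ dist x y < e) -> A x.

Definition borel_structure : Prop :=
  forall A : set T, measurable A <-> <<s [set B | d_open B] >> A.

Lemma cball_def x r y : cball x r y = (dist x y <= r). Proof. by []. Qed.

Variable mu : {measure set T -> \bar R}.

Definition locally_finite : Prop :=
  forall x, exists2 r, 0 < r & (mu (cball x r) < +oo)%E.

Definition full_support : Prop :=
  forall x r, 0 < r -> (0 < mu (cball x r))%E.

Definition unif_loc_doubling : Prop :=
  forall Rr, 0 < Rr -> exists D : R, forall x r, 0 < r -> r <= Rr ->
    (mu (cball x (2 * r)) <= D%:E * mu (cball x r))%E.

End Defs.

Definition Av {R : realType} {dsp : measure_display} {T : measurableType dsp}
  (m : {measure set T -> \bar R}) (G : set T) (g : T -> \bar R) : \bar R :=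
  if (0 < m G)%E then (((fine (m G))^-1)%:E * \int[m]_(x in G) g x)%E else 0%E.

Definition Eosc {R : realType} {dsp : measure_display} {T : measurableType dsp}
  (m : {measure set T -> \bar R}) (g : T -> R) (G : set T) : \bar R :=
  ereal_inf [set Av m G (fun x => (`|g x - c|)%:E) | c in [set: R]].

Section Defs2.
Context {R : realType} {dsp : measure_display} {T : measurableType dsp}.
Variable dist : T -> T -> R.

Definition lipschitz (f : T -> R) : Prop :=
  exists L : R, forall x y, `|f x - f y| <= L * dist x y.

Definition lip (f : T -> R) (x : T) : \bar R :=
  ereal_sup [set ereal_inf [set ereal_sup
      [set (`|f y - f x| / r)%:E | y in cball dist x r]
    | r in [set r | 0 < r < delta]] | delta in [set delta | 0 < delta]].

Variable mu : {measure set T -> \bar R}.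

Definition local_poincare (p : R) : Prop :=
  forall Rr, 0 < Rr -> exists C lam : R, [/\ 1 <= C, 1 <= lam &
    forall f, lipschitz f -> forall x r, 0 < r -> r <= Rr ->
      (Eosc mu f (cball dist x r) <=
       (C * r)%:E * poweR (Av mu (cball dist x (lam * r)) (fun y => poweR (lip f y) p))
                          p^-1)%E].

Definition lower_dims : set R :=
  [set Q | 0 < Q /\ forall Rr, 0 < Rr -> exists C : R,
    forall x x' r r', 0 < r' -> r' <= r -> r <= Rr ->
      cball dist x' r' `<=` cball dist x r ->
      (((r' / r) `^ Q)%:E * mu (cball dist x r) <= C%:E * mu (cball dist x' r'))%E].

Definition Qlow : \bar R := ereal_inf [set Q%:E | Q in lower_dims].

Definition Hdelta (th delta : R) (E : set T) : \bar R :=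
  ereal_inf [set s | exists (I : set nat) (x : nat -> T) (r : nat -> R),
    [/\ (forall i, I i -> 0 < r i < delta),
        E `<=` \bigcup_(i in I) cball dist (x i) (r i) &
        s = (\sum_(i <oo | i \in I)
               (mu (cball dist (x i) (r i)) * ((r i) `^ (- th))%:E))%E]].

(* H_theta = lim_{delta -> 0} H_{theta,delta}  (a nondecreasing limit, i.e. a sup) *)
Definition Haus (th : R) (E : set T) : \bar R :=
  ereal_sup [set Hdelta th delta E | delta in [set delta | 0 < delta]].

Definition ADR (th : R) (S : set T) : Prop :=
  d_closed dist S /\ exists k1 k2 : R, [/\ 0 < k1, 0 < k2 &
    forall x r, S x -> 0 < r -> r <= 1 ->
      ((k1 * r `^ (- th))%:E * mu (cball dist x r) <= Haus th (cball dist x r `&` S))%E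
   /\ (Haus th (cball dist x r `&` S) <= (k2 * r `^ (- th))%:E * mu (cball dist x r))%E].

End Defs2.

Definition loc_integrable {R : realType} {dsp : measure_display} {T : measurableType dsp}
  (dist : T -> T -> R) (m : {measure set T -> \bar R}) (f : T -> R) : Prop :=
  measurable_fun [set: T] f /\
  forall x, exists2 r, 0 < r & m.-integrable (cball dist x r) (EFin \o f).

(* Main.v *)
Require Import Defs.
From HB Require Import structures.
From mathcomp Require Import all_boot all_order all_algebra.
From mathcomp Require Import all_classical all_reals all_analysis.
From mathcomp Require Import measurable_realfun.
From mathcomp Require Import ring lra.
Set Implicit Arguments. Unset Strict Implicit. Unset Printing Implicit Defensive.
Import Order.TTheory GRing.Theory Num.Theory.
Import numFieldNormedType.Exports.
Local Open Scope classical_set_scope.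
Local Open Scope ring_scope.

Section helpers.
Context {R : realType} {dsp : measure_display} {T : measurableType dsp}.
Variable dist : T -> T -> R.

Lemma closed_meas (A : set T) : borel_structure dist -> d_closed dist A -> measurable A.
Proof.
move=> Hb Hc.
have : measurable (~` A).
  apply/Hb; apply: sub_sigma_algebra => x nAx.
  have : ~ (forall e, 0 < e -> exists y, A y /\ dist x y < e) by move=> /Hc.
  move=> /existsNP [e /not_implyP [e0 /forallNP He]].
  exists e => // z /= xz Az; apply: (He z); split => //.
by move/measurableC; rewrite setCK.
Qed.

Lemma cball_closed x r : is_metric dist -> d_closed dist (cball dist x r).
Proof.
move=> [d0 d_eq dsym dtri] y Hy; rewrite /cball /=.
rewrite leNgt; apply/negP => ry.
have ry0 : 0 < dist x y - r by rewrite subr_gt0.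
have [z [zr yz]] := Hy _ ry0.
move: zr; rewrite /cball /= => zr.
have := dtri x z y; rewrite (dsym z y) => h.
lra.
Qed.

Variable mu : {measure set T -> \bar R}.

Lemma Haus0 th (x0 : T) : (Haus dist mu th set0 <= 0)%E.
Proof.
apply: ge_ereal_sup => _ [delta /= d0 <-].
apply: ereal_inf_lbound; exists set0, (fun _ => x0), (fun _ => delta / 2); split.
- by move=> i [].
- by [].
- by rewrite eseries_pred0 // => i /=; apply/negbTE/negP; rewrite in_setE.
Qed.
End helpers.

Lemma integral_wsum {R : realType} {dsp : measure_display} {T : measurableType dsp}
  (n : nat) (nus : 'I_n -> {measure set T -> \bar R}) (w : 'I_n -> R) (w0 : forall i, 0 <= w i)
  (m : {measure set T -> \bar R})
  (hm : forall A, measurable A -> m A = (\sum_(i < n) (w i)%:E * nus i A)%E)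
  (D : set T) (mD : measurable D) (g : T -> \bar R) (g0 : forall x, D x -> (0 <= g x)%E)
  (mg : measurable_fun D g) :
  (\int[m]_(x in D) g x = \sum_(i < n) (w i)%:E * \int[nus i]_(x in D) g x)%E.
Proof.
case: n nus w w0 hm => [|n] nus w w0 hm.
  rewrite big_ord0 (eq_measure_integral (@mzero _ T R)); last first.
    by move=> A mA _; rewrite hm // big_ord0.
  by rewrite integral_measure_zero.
pose m_ (k : nat) := mscale (NngNum (w0 (inord k))) (nus (inord k)).
rewrite (eq_measure_integral (msum m_ n.+1)); last first.
  move=> A mA _; rewrite hm //= /msum; apply: eq_bigr => i _.
  by rewrite /m_ /mscale /= inord_val.
rewrite ge0_integral_measure_sum //; apply: eq_bigr => i _.
by rewrite /m_ ge0_integral_mscale //= inord_val.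
Qed.

Section param.
Context {R : realType} {dsp : measure_display} {T : measurableType dsp}.
Variables (nu : {measure set T -> \bar R}) (G : set T) (mG : measurable G).
Hypothesis finG : (nu G < +oo)%E.

Let nuG := mrestr nu mG.
HB.instance Definition _ := Measure.on nuG.
Let fin_nuG : fin_num_fun nuG.
Proof.
move=> A mA; rewrite ge0_fin_numE; last by apply: measure_ge0; exact: measurableI.
apply: le_lt_trans finG; rewrite /nuG /mrestr; apply: le_measure => //; rewrite inE //.
exact: measurableI.
Qed.
HB.instance Definition _ := @Measure_isFinite.Build _ T _ nuG fin_nuG.

Lemma param_meas (h : T * T -> \bar R) : measurable_fun setT h -> (forall z, (0 <= h z)%E) ->
  measurable_fun setT (fun x => (\int[nu]_(y in G) h (x, y))%E).
Proof.
move=> mh h0.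
have -> : (fun x => (\int[nu]_(y in G) h (x, y))%E) = fubini_F nuG h.
  apply/funext => x; rewrite /fubini_F.
  rewrite -(setUv G) integral_setU //; last 3 first.
  - exact: measurableC.
  - by apply: measurable_funTS; exact: (measurableT_comp mh (pair1_measurable x)).
  - by rewrite /disj_set setICr.
  rewrite (@null_set_integral _ _ _ nuG (~` G)) ?adde0; last 3 first.
  - exact: measurableC.
  - by apply: measurable_funTS; exact: (measurableT_comp mh (pair1_measurable x)).
  - by transitivity (nu (~` G `&` G)); [|rewrite setICl measure0].
  apply: eq_measure_integral => A mA AG.
  have e : nu (A `&` G) = nu A by rewrite setIidl.
  by rewrite -e; reflexivity.
exact: measurable_fun_fubini_tonelli_F.
Qed.
End param.

Unset Implicit Arguments.

Theorem lemma3p6 (R : realType) (dsp : measure_display) (T : measurableType dsp)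
  (dist : T -> T -> R) (mu : {measure set T -> \bar R}) (p : R)
  (Hmet : is_metric dist) (Hcomplete : complete_metric dist)
  (Hsep : separable_metric dist) (Hborel : borel_structure dist)
  (Hlocfin : locally_finite dist mu) (Hsupp : full_support dist mu)
  (Hdoub : unif_loc_doubling dist mu)
  (Hp : 1 < p) (HPI : local_poincare dist mu p)
  (thlow th : R) (N : nat) (ths : 'I_N -> R) (S : 'I_N -> set T)
  (nu : 'I_N -> {measure set T -> \bar R}) (m : nat -> {measure set T -> \bar R}) :
  0 <= thlow -> thlow < p -> (thlow%:E < Qlow dist mu)%E ->
  thlow <= th -> th < p ->
  (2 <= N)%N ->
  (forall i, 0 <= ths i) ->
  (forall i j : 'I_N, (i < j)%N -> ths i < ths j) ->
  (forall i : 'I_N, val i = N.-1 -> ths i = thlow) ->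
  (forall i, ADR dist mu (ths i) (S i)) ->
  (* nu i = H_{theta_i} restricted to S^i (as a Borel measure) *)
  (forall i A, measurable A -> nu i A = Haus dist mu (ths i) (A `&` S i)) ->
  (* m k = sum_i 2^{k (theta - theta_i)} H_{theta_i} restricted to S^i *)
  (forall (k : nat) A, measurable A ->
     m k A = (\sum_(i < N) ((2 `^ (k%:R * (th - ths i)))%:E * nu i A))%E) ->
  forall c : R, 1 <= c ->
  exists C : R, 0 < C /\
  forall (k : nat) (xu : T) (I : {set 'I_N}),
    (forall i, i \in I ->
       exists xi, S i xi /\ cball dist xi (2 ^- k) `<=` cball dist xu (c * 2 ^- k)) ->
    (forall j, j \notin I -> cball dist xu (c * 2 ^- k) `&` S j = set0) ->
    forall f : T -> R, loc_integrable dist (m 0%N) f ->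
    let B := cball dist xu (c * 2 ^- k) in
    (Eosc (m k) f B <=
      C%:E * (\sum_(i in I) Eosc (nu i) f B
        + \sum_(i in I) \sum_(j in I | j != i)
            Av (nu i) (B `&` S i)
               (fun y => Av (nu j) (B `&` S j) (fun z => (`|f y - f z|)%:E))))%E.
Proof.
move=> thlow0 thlowp Qlow_ thth thp N2 ths0 thsinc thsN ADRi nuE mE c c1.
exists 2; split; first by [].
move=> k xu I HI HnI f [mf _].
rewrite /is_true; cbv zeta; set B := cball dist xu (c * 2 ^- k).
have HnI' : forall j, j \notin I -> B `&` S j = set0 by exact: HnI.
clear HnI.
have mB : measurable B by apply: (closed_meas Hborel); exact: cball_closed.
have mS i : measurable (S i) by apply: (closed_meas Hborel); exact: (ADRi i).1.
pose G i := B `&` S i.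
have mG i : measurable (G i) by exact: measurableI.
have nu0 i A : measurable A -> A `&` S i = set0 -> nu i A = 0%E.
  move=> mA AS; apply/eqP; rewrite eq_le measure_ge0 andbT.
  by rewrite nuE // AS; exact: (Haus0 _ _ _ xu).
have nuBS i : nu i (B `\` S i) = 0%E.
  apply: nu0; first exact: measurableD.
  by rewrite setDE -setIA setICl setI0.
have nuGB i : nu i (G i) = nu i B by rewrite !nuE // /G -setIA setIid.
have nuj j : j \notin I -> nu j B = 0%E.
  by move=> jI; apply: nu0 => //; exact: HnI'.
have intBG i (g : T -> \bar R) : measurable_fun B g ->
    (\int[nu i]_(x in B) g x = \int[nu i]_(x in G i) g x)%E.
  move=> mg.
  have eB : B = G i `|` (B `\` S i).
    apply/seteqP; split => x; rewrite /G /=; last by case=> -[].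
    by move=> Bx; case: (pselect (S i x)) => ?; [left|right].
  rewrite [in LHS]eB integral_setU //; last 3 first.
  - exact: measurableD.
  - by rewrite -eB.
  - by rewrite /disj_set /G setDE setIACA setICr setI0.
  rewrite (@null_set_integral _ _ _ _ (B `\` S i)) ?adde0 //; first exact: measurableD.
  by apply: measurable_funS mg => // x [].
have AvBG i g : measurable_fun B g -> Av (nu i) B g = Av (nu i) (G i) g.
  by move=> mg; rewrite /Av nuGB intBG.
have Av_ge0 (mm : {measure set T -> \bar R}) (D : set T) (g : T -> \bar R) :
    (forall x, D x -> 0 <= g x)%E -> (0 <= Av mm D g)%E.
  move=> g0; rewrite /Av; case: ifP => // _; apply: mule_ge0.
    by rewrite lee_fin invr_ge0 fine_ge0 // measure_ge0.
  exact: integral_ge0.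
have Eosc_ge0 (mm : {measure set T -> \bar R}) (D : set T) : (0 <= Eosc mm f D)%E.
  by apply: le_ereal_inf_tmp => _ [c' _ <-]; apply: (Av_ge0) => x _.
have Eosc_le (mm : {measure set T -> \bar R}) (D : set T) c' :
    (Eosc mm f D <= Av mm D (fun x => (`|f x - c'|)%:E))%E.
  by apply: ereal_inf_lbound; exists c'.
have RHS_ge0 : (0 <= \sum_(i in I) Eosc (nu i) f B
        + \sum_(i in I) \sum_(j in I | j != i)
            Av (nu i) (B `&` S i)
               (fun y => Av (nu j) (B `&` S j) (fun z => (`|f y - f z|)%:E)))%E.
  apply: adde_ge0; apply: sume_ge0 => i _ //.
  apply: sume_ge0 => j _; apply: (Av_ge0) => y _; exact: Av_ge0.
have mfc (D : set T) c' : measurable_fun D (fun x => (`|f x - c'|)%:E).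
  apply: measurable_funTS; apply/measurable_EFinP; apply: measurableT_comp.
    exact: normr_measurable.
  by apply: measurable_funB => //; exact: measurable_cst.
have two0 : (0 <= (2%:E : \bar R))%E by rewrite lee_fin.
pose w i := 2 `^ (k%:R * (th - ths i)).
have w0 i : 0 < w i by apply: powR_gt0.
have mkE A : measurable A -> m k A = (\sum_(i < N) (w i)%:E * nu i A)%E.
  by move=> mA; rewrite mE.
have [M0|M0] := boolP (0 < m k B)%E; last first.
  apply: le_trans (Eosc_le _ _ 0) _; rewrite /Av (negbTE M0).
  by apply: mule_ge0 => //; exact: RHS_ge0.
have [Minf|Mfin] := eqVneq (m k B) +oo%E.
  apply: le_trans (Eosc_le _ _ 0) _; rewrite /Av M0 Minf /= invr0 mul0e.
  by apply: mule_ge0 => //; exact: RHS_ge0.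
have Mfin' : (m k B < +oo)%E by rewrite lt_neqAle Mfin leey.
have Mfn : m k B \is a fin_num by rewrite ge0_fin_numE ?measure_ge0.
set Mr := fine (m k B).
have MrE : m k B = Mr%:E by rewrite fineK.
have Mr0 : 0 < Mr by rewrite -lte_fin -MrE.
have termle i : ((w i)%:E * nu i B <= m k B)%E.
  rewrite (mkE _ mB) (bigD1 i) //=; apply: leeDl; apply: sume_ge0 => j _.
  by apply: mule_ge0; [rewrite lee_fin; exact: ltW| exact: measure_ge0].
have nufin i : nu i B \is a fin_num.
  rewrite ge0_fin_numE ?measure_ge0 //; rewrite ltNge leye_eq; apply/negP => /eqP h.
  by have := termle i; rewrite h gt0_muley ?lte_fin // MrE leye_eq.
set ar := fun i => fine (nu i B).
have arE i : nu i B = (ar i)%:E by rewrite fineK.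
have ar0 i : 0 <= ar i by rewrite fine_ge0 // measure_ge0.
have lam1 i : w i * ar i / Mr <= 1.
  rewrite ler_pdivrMr // mul1r -lee_fin EFinM -arE -MrE; exact: termle.
have lam0 i : 0 <= w i * ar i / Mr.
  apply: divr_ge0; [apply: mulr_ge0; [exact: ltW| exact: ar0] | exact: ltW].
have [i0 Hi0] : exists i, (0 < nu i B)%E.
  apply: contrapT => /forallNP H.
  move: M0; rewrite mkE // big1 ?ltxx // => i _.
  have := measure_ge0 (nu i) B; rewrite le_eqVlt => /orP[/eqP <-|/H//].
  by rewrite mule0.
have i0I : i0 \in I.
  by apply: contraT => /nuj h; move: Hi0; rewrite h ltxx.
have a0pos : 0 < ar i0 by rewrite -lte_fin -arE.
have icst (mm : {measure set T -> \bar R}) (D : set T) (mD : measurable D) (K : \bar R) :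
  (\int[mm]_(x in D) K = K * mm D)%E := integral_cst mm mD K.
have mgp : measurable_fun setT (fun p : T * T => (`|f p.2 - f p.1|)%:E).
  apply/measurable_EFinP; apply: measurableT_comp; first exact: normr_measurable.
  apply: measurable_funB; [exact: measurableT_comp mf measurable_snd | exact: measurableT_comp mf measurable_fst].
pose A i z := Av (nu i) (G i) (fun y => (`|f y - f z|)%:E).
have A0 i z : (0 <= A i z)%E by apply: (Av_ge0) => y _.
have mA i : measurable_fun setT (A i).
  rewrite /A /Av; have [h|h] := boolP (0 < nu i (G i))%E; last first.
    exact: measurable_cst.
  apply: measurable_funeM.
  have finG : (nu i (G i) < +oo)%E by rewrite nuGB -ge0_fin_numE ?measure_ge0.
  exact: (param_meas (mG i) finG mgp).
have step1 z : (Eosc (m k) f B <= \sum_(i < N) (w i * ar i / Mr)%:E * A i z)%E.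
  apply: le_trans (Eosc_le _ _ (f z)) _.
  rewrite /Av M0 -/Mr (@integral_wsum _ _ _ _ nu w (fun i => ltW (w0 i)) _ mkE) //.
  rewrite ge0_sume_distrr; last first.
    move=> i _; apply: mule_ge0; [rewrite lee_fin; exact: ltW | exact: integral_ge0].
  apply: lee_sum => i _.
  rewrite /A /Av nuGB; have [h|h] := boolP (0 < nu i B)%E.
    rewrite arE /= (intBG i) //.
    rewrite !muleA -!EFinM; apply: lee_wpmul2r; first exact: integral_ge0.
    have arn0 : ar i != 0 by rewrite gt_eqF // -lte_fin -arE.
    rewrite lee_fin le_eqVlt; apply/orP; left; apply/eqP.
    by field; apply/andP; split => //; exact: lt0r_neq0.
  have nB0 : nu i B = 0%E.
    by apply/eqP; rewrite eq_le measure_ge0 andbT leNgt.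
  rewrite (intBG i) // null_set_integral //; first by rewrite !mule0.
  by rewrite nuGB.
set H := fun z => (\sum_(i < N) (w i * ar i / Mr)%:E * A i z)%E.
have mH : measurable_fun setT H.
  by apply: emeasurable_sum => i; apply: measurable_funeM.
have H0 z : (0 <= H z)%E.
  by apply: sume_ge0 => i _; apply: mule_ge0 => //; rewrite lee_fin.
have step2 : (Eosc (m k) f B <= Av (nu i0) (G i0) H)%E.
  rewrite /Av nuGB Hi0 arE /=.
  apply: le_trans (_ : _ <= (ar i0)^-1%:E * \int[nu i0]_(x in G i0) (Eosc (m k) f B))%E _.
    rewrite icst // nuGB arE muleCA -EFinM mulVf ?mule1 //; exact: lt0r_neq0.
  apply: lee_wpmul2l; first by rewrite lee_fin invr_ge0.
  apply: ge0_le_integral => //.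
  all: try (by move=> x _; exact: Eosc_ge0).
  all: try exact: measurable_cst.
  all: try (by move=> x _; exact: step1).
  all: try exact: measurable_funTS.
have step3 : (Av (nu i0) (G i0) H <= \sum_(i < N) Av (nu i0) (G i0) (A i))%E.
  rewrite /Av nuGB Hi0 /=.
  rewrite (ge0_integral_sum _ _ (f := fun i z => ((w i * ar i / Mr)%:E * A i z)%E)) //; last 2 first.
  - by move=> i; apply: measurable_funTS; apply: measurable_funeM.
  - by move=> i x _; apply: mule_ge0 => //; rewrite lee_fin.
  rewrite ge0_sume_distrr; last by move=> i _; apply: integral_ge0 => x _; apply: mule_ge0 => //; rewrite lee_fin.
  apply: lee_sum => i _.
  rewrite ge0_integralZl //; last 2 first.
  - by apply: measurable_funTS.
  - by rewrite lee_fin.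
  apply: lee_wpmul2l; first by rewrite lee_fin invr_ge0 fine_ge0 // measure_ge0.
  apply: gee_pMl; [by [] | exact: integral_ge0 | by rewrite lee_fin].
pose Tm i j := Av (nu i) (B `&` S i)
               (fun y => Av (nu j) (B `&` S j) (fun z => (`|f y - f z|)%:E)).
have Tm0 i j : (0 <= Tm i j)%E by apply: (Av_ge0) => y _; apply: (Av_ge0).
have rest : (\sum_(i < N | i != i0) Av (nu i0) (G i0) (A i)
              = \sum_(j in I | j != i0) Tm i0 j)%E.
  rewrite (bigID (fun i => i \in I)) /= [X in (_ + X)%E]big1 ?adde0; last first.
    move=> i /andP[_ iI].
    have -> : A i = cst 0%E.
      by apply/funext => z; rewrite /A /Av nuGB nuj // ltxx.
    rewrite /Av; case: ifP => // _; by rewrite integral0 mule0.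
  apply: eq_big => [i|i _]; first by rewrite andbC.
  rewrite /Tm /A; congr Av; apply/funext => y; congr Av; apply/funext => z.
  by rewrite distrC.
have hT : (\sum_(j in I | j != i0) Tm i0 j
     <= \sum_(i in I) \sum_(j in I | j != i) Tm i j)%E.
  rewrite [X in (_ <= X)%E](bigD1 i0) //=; apply: leeDl.
  by apply: sume_ge0 => i _; apply: sume_ge0 => j _.
have hdiag : (Av (nu i0) (G i0) (A i0) <= 2%:E * Eosc (nu i0) f B)%E.
  suff h : forall c', (Av (nu i0) (G i0) (A i0)
                        <= 2%:E * Av (nu i0) B (fun x => (`|f x - c'|)%:E))%E.
    rewrite -lee_pdivrMl //; apply: le_ereal_inf_tmp => _ [c' _ <-].
    by rewrite lee_pdivrMl //; exact: h.
  move=> c'.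
  rewrite (AvBG i0 _ (mfc B c')).
  set P := Av (nu i0) (G i0) (fun x => (`|f x - c'|)%:E).
  have PE : P = ((ar i0)^-1%:E * \int[nu i0]_(x in G i0) (`|f x - c'|)%:E)%E.
    by rewrite /P /Av nuGB Hi0 arE.
  have P0 : (0 <= P)%E by apply: (Av_ge0) => x _.
  have hA z : (A i0 z <= P + (`|f z - c'|)%:E)%E.
    rewrite /A /Av nuGB Hi0 arE /=.
    apply: le_trans (_ : _ <= (ar i0)^-1%:E * \int[nu i0]_(y in G i0)
                   ((`|f y - c'|)%:E + (`|f z - c'|)%:E))%E _.
      apply: lee_wpmul2l; first by rewrite lee_fin invr_ge0.
      apply: ge0_le_integral.
      - exact: mG.
      - by move=> x _; rewrite lee_fin.
      - exact: mfc.
      - by apply: emeasurable_funD; [exact: mfc | exact: measurable_cst].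
      move=> y _; rewrite -EFinD lee_fin.
      by rewrite [X in (_ <= _ + X)%R]distrC ler_distD.
    rewrite (ge0_integralD _ (mG i0)); last 4 first.
    - by move=> x _; rewrite lee_fin.
    - exact: mfc.
    - by move=> x _; rewrite lee_fin.
    - exact: measurable_cst.
    rewrite (icst _ _ (mG i0)) nuGB arE.
    rewrite ge0_muleDr; last 2 first.
    - by apply: integral_ge0 => x _; rewrite lee_fin.
    - by apply: mule_ge0; rewrite lee_fin; [exact: normr_ge0 | exact: ar0].
    rewrite -PE muleCA -EFinM mulVf; last exact: lt0r_neq0.
    by rewrite mulr1 lexx.
  rewrite /Av nuGB Hi0 arE /=.
  apply: le_trans (_ : _ <= (ar i0)^-1%:E * \int[nu i0]_(z in G i0)
                 (P + (`|f z - c'|)%:E))%E _.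
    apply: lee_wpmul2l; first by rewrite lee_fin invr_ge0; exact: ltW.
    apply: ge0_le_integral.
    - exact: mG.
    - by move=> x _; exact: A0.
    - by apply: measurable_funTS.
    - by apply: emeasurable_funD; [exact: measurable_cst | exact: mfc].
    by move=> x _; exact: hA.
  rewrite (ge0_integralD _ (mG i0)); last 4 first.
  - by move=> x _; exact: P0.
  - exact: measurable_cst.
  - by move=> x _; rewrite lee_fin.
  - exact: mfc.
  rewrite (icst _ _ (mG i0)) nuGB arE.
  rewrite ge0_muleDr; last 2 first.
  - by apply: mule_ge0; [exact: P0 | rewrite lee_fin; exact: ar0].
  - by apply: integral_ge0 => x _; rewrite lee_fin.
  rewrite -PE muleCA -EFinM mulVf; last exact: lt0r_neq0.
  rewrite mule1.
  have -> : (2%:E : \bar R) = 1%:E + 1%:E by rewrite -EFinD; congr EFin; lra.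
  rewrite ge0_muleDl; [|by rewrite lee_fin ler01|by rewrite lee_fin ler01].
  by rewrite !mul1e lexx.
have hE : (2%:E * Eosc (nu i0) f B <= 2%:E * \sum_(i in I) Eosc (nu i) f B)%E.
  apply: lee_wpmul2l; first exact: two0.
  rewrite (bigD1 i0 i0I) /=; apply: leeDl.
  by apply: sume_ge0 => i _; exact: Eosc_ge0.
apply: le_trans step2 _; apply: le_trans step3 _.
rewrite (bigD1 i0 isT) /= rest.
rewrite ge0_muleDr; last 2 first.
- by apply: sume_ge0 => i _; exact: Eosc_ge0.
- by apply: sume_ge0 => i _; apply: sume_ge0 => j _; exact: Tm0.
apply: leeD; first exact: le_trans hdiag hE.
apply: le_trans hT _.
rewrite -[X in (X <= _)%E]mul1e; apply: lee_wpmul2r; last by rewrite lee_fin; lra.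
by apply: sume_ge0 => i _; apply: sume_ge0 => j _; exact: Tm0.
Qed.
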